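(* Let $\kappa$ be a cardinal. Let $(A_\alpha)_{\alpha\in\mathrm{Ord}}$ be cpo's and $f_{\alpha,\beta}\colon A_\alpha\to A_\beta$ ($\alpha\le\beta$) cpo maps with $f_{\beta,\gamma}\circ f_{\alpha,\beta}=f_{\alpha,\gamma}$ for all $\alpha\le\beta\le\gamma$ and $f_{\alpha,\alpha}=\mathrm{id}_{A_\alpha}$. Suppose that $A_0=\kappa\cdot 3$ is the coproduct in $\mathbf{CPO}$ of $\kappa$ copies of the chain $3$; that for every ordinal $\alpha$, $f_{\alpha,\alpha+1}\colon A_\alpha\to A_{\alpha+1}$ is a coequalizer in $\mathbf{CPO}$ of some pair of cpo maps $2\to A_\alpha$; and that for every limit ordinal $\alpha$, $A_\alpha=\operatorname{colim}_{\beta<\alpha}A_\beta$ in $\mathbf{CPO}$ with colimit injections $f_{\beta,\alpha}$. Then for every ordinal $\alpha$: (i) if $\kappa$ is infinite, $|A_\alpha|\le 2^\kappa$; (ii) if $\kappa$ is finite, $|A_\alpha|\le 2\kappa+1$.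
   Context: A cpo is a poset in which every chain, including the empty chain, has a join (so every cpo has a least element $0$). A cpo map is a map preserving joins of all chains. $\mathbf{CPO}$ is the category of cpo's and cpo maps; it is complete and cocomplete, and coproducts are disjoint unions with least elements identified. $2$ is the chain $0<1$ and $3$ is the chain $0<1<2$. *)

(* Defs.v *)
From Stdlib Require Import Classical Arith Lia.

Definition is_chain {T : Type} (le : T -> T -> Prop) (C : T -> Prop) : Prop :=
  forall x y, C x -> C y -> le x y \/ le y x.

Definition is_lub {T : Type} (le : T -> T -> Prop) (C : T -> Prop) (s : T) : Prop :=
  (forall x, C x -> le x s) /\ (forall u, (forall x, C x -> le x u) -> le s u).

(* A cpo: a poset in which every chain (including the empty chain) has a join. *)
Definition is_cpo {T : Type} (le : T -> T -> Prop) : Prop :=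
  (forall x, le x x) /\
  (forall x y z, le x y -> le y z -> le x z) /\
  (forall x y, le x y -> le y x -> x = y) /\
  (forall C, is_chain le C -> exists s, is_lub le C s).

Record cpo := Cpo {
  carrier :> Type;
  cle : carrier -> carrier -> Prop;
  cpo_ax : is_cpo cle
}.

Definition is_cpo_map {A B : cpo} (g : A -> B) : Prop :=
  forall (C : A -> Prop) (s : A), is_chain (cle A) C -> is_lub (cle A) C s ->
    is_lub (cle B) (fun y => exists x, C x /\ y = g x) (g s).

Definition nchain_le (n : nat) (x y : {i : nat | i <= n}) : Prop :=
  proj1_sig x <= proj1_sig y.

Lemma bounded_max (P : nat -> Prop) : forall k,
  (exists i, P i /\ i <= k) -> exists m, P m /\ m <= k /\ forall i, P i -> i <= k -> i <= m.
Proof.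
  induction k as [|k IH]; intros [i [Pi Hi]].
  - exists 0. assert (i = 0) by lia; subst. repeat split; auto; intros; lia.
  - destruct (classic (P (S k))) as [HS|HS].
    + exists (S k). repeat split; auto.
    + assert (Hik : i <= k) by (destruct (Nat.eq_dec i (S k)); [subst; contradiction|lia]).
      destruct (IH (ex_intro _ i (conj Pi Hik))) as [m [Pm [Hm Hmax]]].
      exists m. repeat split; auto; try lia.
      intros j Pj Hj. destruct (Nat.eq_dec j (S k)); [subst; contradiction|]. apply Hmax; auto; lia.
Qed.

Lemma nchain_is_cpo (n : nat) : is_cpo (nchain_le n).
Proof.
  unfold nchain_le; repeat split.
  - intros; lia.
  - intros; lia.
  - intros [x Hx] [y Hy] H1 H2; simpl in *. assert (x = y) by lia; subst.
    f_equal. apply Peano_dec.le_unique.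
  - intros C _.
    destruct (classic (exists x, C x)) as [[x Cx]|Hne].
    + destruct (bounded_max (fun i => exists p : i <= n, C (exist _ i p)) n)
        as [m [[pm Cm] [Hm Hmax]]].
      { destruct x as [x px]. exists x. split; [exists px; exact Cx|exact px]. }
      exists (exist _ m pm). split.
      * intros [y py] Cy; simpl. apply Hmax; [exists py; exact Cy|exact py].
      * intros u Hu. exact (Hu _ Cm).
    + exists (exist _ 0 (Nat.le_0_l n)). split.
      * intros x Cx; exfalso; apply Hne; eauto.
      * intros u _; simpl; lia.
Qed.

Definition nchain_cpo (n : nat) : cpo := Cpo {i : nat | i <= n} (nchain_le n) (nchain_is_cpo n).

(* 2 is the chain 0 < 1, 3 is the chain 0 < 1 < 2 *)
Definition two : cpo := nchain_cpo 1.
Definition three : cpo := nchain_cpo 2.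

Definition is_coproduct {K : Type} (X : K -> cpo) (Z : cpo) (inj : forall k, X k -> Z) : Prop :=
  (forall k, is_cpo_map (inj k)) /\
  forall (C : cpo) (g : forall k, X k -> C), (forall k, is_cpo_map (g k)) ->
    exists h : Z -> C, is_cpo_map h /\ (forall k x, h (inj k x) = g k x) /\
      (forall h' : Z -> C, is_cpo_map h' -> (forall k x, h' (inj k x) = g k x) ->
         forall z, h' z = h z).

Definition is_coequalizer {X Y Z : cpo} (u v : X -> Y) (q : Y -> Z) : Prop :=
  is_cpo_map q /\ (forall x, q (u x) = q (v x)) /\
  forall (C : cpo) (g : Y -> C), is_cpo_map g -> (forall x, g (u x) = g (v x)) ->
    exists h : Z -> C, is_cpo_map h /\ (forall y, h (q y) = g y) /\
      (forall h' : Z -> C, is_cpo_map h' -> (forall y, h' (q y) = g y) ->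
         forall z, h' z = h z).

Definition well_order {I : Type} (lt : I -> I -> Prop) : Prop :=
  (forall a b c, lt a b -> lt b c -> lt a c) /\
  (forall a b, lt a b \/ a = b \/ lt b a) /\
  well_founded lt.

Definition wle {I : Type} (lt : I -> I -> Prop) (a b : I) : Prop := lt a b \/ a = b.

Definition is_succ {I : Type} (lt : I -> I -> Prop) (a b : I) : Prop :=
  lt a b /\ forall c, lt a c -> wle lt b c.

Definition is_limit {I : Type} (lt : I -> I -> Prop) (a : I) : Prop :=
  (exists b, lt b a) /\ (forall b, lt b a -> exists c, lt b c /\ lt c a).

Definition is_colimit_below {I : Type} (lt : I -> I -> Prop) (A : I -> cpo)
    (f : forall a b, A a -> A b) (a : I) : Prop :=
  (forall b, lt b a -> is_cpo_map (f b a)) /\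
  (forall b c, wle lt b c -> lt c a -> forall x, f c a (f b c x) = f b a x) /\
  forall (C : cpo) (g : forall b, A b -> C),
    (forall b, lt b a -> is_cpo_map (g b)) ->
    (forall b c, wle lt b c -> lt c a -> forall x, g c (f b c x) = g b x) ->
    exists h : A a -> C, is_cpo_map h /\ (forall b, lt b a -> forall x, h (f b a x) = g b x) /\
      (forall h' : A a -> C, is_cpo_map h' ->
         (forall b, lt b a -> forall x, h' (f b a x) = g b x) -> forall y, h' y = h y).

Definition injective {X Y : Type} (e : X -> Y) : Prop := forall x y, e x = e y -> x = y.

Definition has_card (K : Type) (n : nat) : Prop :=
  exists e : K -> {m : nat | m < n}, injective e /\ forall y, exists x, e x = y.

Definition finite_type (K : Type) : Prop := exists n, has_card K n.

(* Main.v *)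
Require Import Defs.
From Stdlib Require Import Classical ClassicalEpsilon ProofIrrelevance FunctionalExtensionality PropExtensionality Arith Lia List.

Lemma cle_refl (A : cpo) (x : A) : cle A x x.
Proof. destruct (cpo_ax A) as [H _]; apply H. Qed.
Lemma cle_trans (A : cpo) (x y z : A) : cle A x y -> cle A y z -> cle A x z.
Proof. destruct (cpo_ax A) as [_ [H _]]; apply H. Qed.
Lemma cle_antisym (A : cpo) (x y : A) : cle A x y -> cle A y x -> x = y.
Proof. destruct (cpo_ax A) as [_ [_ [H _]]]; apply H. Qed.
Lemma cpo_lub (A : cpo) (C : A -> Prop) : is_chain (cle A) C -> exists s, is_lub (cle A) C s.
Proof. destruct (cpo_ax A) as [_ [_ [_ H]]]; apply H. Qed.

Lemma lub_unique (A : cpo) C s t : is_lub (cle A) C s -> is_lub (cle A) C t -> s = t.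
Proof. intros [H1 H2] [H3 H4]. apply cle_antisym; [apply H2 | apply H4]; assumption. Qed.

Lemma is_lub_ext {T} (le : T->T->Prop) (C C' : T -> Prop) s :
  (forall x, C x <-> C' x) -> is_lub le C s -> is_lub le C' s.
Proof. intros E [H1 H2]; split.
  - intros x Cx; apply H1, E, Cx.
  - intros u Hu; apply H2; intros x Cx; apply Hu, E, Cx. Qed.

Lemma is_chain_ext {T} (le : T->T->Prop) (C C' : T -> Prop) :
  (forall x, C x <-> C' x) -> is_chain le C -> is_chain le C'.
Proof. intros E H x y Cx Cy; apply H; apply E; auto. Qed.

Lemma cpo_map_mono (A B : cpo) (g : A -> B) : is_cpo_map g -> forall x y, cle A x y -> cle B (g x) (g y).
Proof.
  intros Hg x y Hxy.
  assert (Hc : is_chain (cle A) (fun w => w = x \/ w = y)).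
  { intros a b [->| ->] [->| ->]; auto using cle_refl. }
  assert (Hl : is_lub (cle A) (fun w => w = x \/ w = y) y).
  { split. - intros w [->| ->]; auto using cle_refl. - intros u Hu; apply Hu; auto. }
  destruct (Hg _ _ Hc Hl) as [H1 _]. apply H1. exists x; auto.
Qed.

Lemma img_chain (A B : cpo) (g : A -> B) (C : A -> Prop) : is_cpo_map g -> is_chain (cle A) C ->
  is_chain (cle B) (fun y => exists x, C x /\ y = g x).
Proof.
  intros Hg Hc y1 y2 [x1 [C1 ->]] [x2 [C2 ->]].
  destruct (Hc x1 x2 C1 C2); [left|right]; eapply cpo_map_mono; eauto.
Qed.

Lemma cpo_map_comp (A B D : cpo) (g : A -> B) (h : B -> D) :
  is_cpo_map g -> is_cpo_map h -> is_cpo_map (fun x => h (g x)).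
Proof.
  intros Hg Hh C s Hc Hl.
  pose proof (Hh _ _ (img_chain A B g C Hg Hc) (Hg C s Hc Hl)) as H2.
  eapply is_lub_ext; [|exact H2]. intro y; split.
  - intros [b [[a [Ca ->]] ->]]; eauto.
  - intros [a [Ca ->]]; eauto.
Qed.

Lemma cpo_map_id (A : cpo) : is_cpo_map (fun x : A => x).
Proof.
  intros C s Hc Hl. eapply is_lub_ext; [|exact Hl]. intro y; split.
  - intros Cy; eauto.
  - intros [x [Cx ->]]; auto.
Qed.

Definition chain_closed (A : cpo) (P : A -> Prop) : Prop :=
  forall C s, is_chain (cle A) C -> is_lub (cle A) C s -> (forall c, C c -> P c) -> P s.

Section Sub.
Variable (A : cpo) (P : A -> Prop) (HP : chain_closed A P).
Definition sub_le (x y : {a : A | P a}) : Prop := cle A (proj1_sig x) (proj1_sig y).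

Lemma sub_lub_of (C : {a | P a} -> Prop) (s : {a|P a}) :
  is_lub (cle A) (fun y => exists x, C x /\ y = proj1_sig x) (proj1_sig s) -> is_lub sub_le C s.
Proof. intros [H1 H2]; split.
 - intros x Cx; apply H1; eauto.
 - intros u Hu; apply H2. intros y [x [Cx ->]]. apply Hu; auto.
Qed.

Lemma sub_chain_img C : is_chain sub_le C -> is_chain (cle A) (fun y => exists x, C x /\ y = proj1_sig x).
Proof. intros Hc y1 y2 [x1 [C1 ->]] [x2 [C2 ->]]. apply Hc; auto. Qed.

Lemma sub_is_cpo : is_cpo sub_le.
Proof.
  split; [|split; [|split]].
  - intros; apply cle_refl.
  - intros x y z; apply cle_trans.
  - intros [x px] [y py] H1 H2; unfold sub_le in *; simpl in *.
    assert (x = y) by (apply cle_antisym; auto). subst. f_equal; apply proof_irrelevance.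
  - intros C Hc. destruct (cpo_lub A _ (sub_chain_img C Hc)) as [t Ht].
    assert (Pt : P t). { apply (HP _ t (sub_chain_img C Hc) Ht). intros c [x [_ ->]]; exact (proj2_sig x). }
    exists (exist _ t Pt). apply sub_lub_of; exact Ht.
Qed.

Definition subcpo : cpo := Cpo {a : A | P a} sub_le sub_is_cpo.

Lemma incl_cpo_map : @is_cpo_map subcpo A (@proj1_sig _ _).
Proof.
  intros C s Hc Hl.
  destruct (cpo_lub A _ (sub_chain_img C Hc)) as [t Ht].
  assert (Pt : P t). { apply (HP _ t (sub_chain_img C Hc) Ht). intros c [x [_ ->]]; exact (proj2_sig x). }
  assert (Hl' := sub_lub_of C (exist _ t Pt) Ht).
  assert (E : s = exist _ t Pt) by (eapply (lub_unique subcpo); eauto).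
  subst; exact Ht.
Qed.

Lemma corestr_cpo_map (B : cpo) (g : B -> A) (Hg : is_cpo_map g) (H : forall y, P (g y)) :
  @is_cpo_map B subcpo (fun y => exist _ (g y) (H y)).
Proof.
  intros C s Hc Hl. apply sub_lub_of. simpl.
  eapply is_lub_ext; [|exact (Hg C s Hc Hl)]. intro y; split.
  - intros [x [Cx ->]]. exists (exist _ (g x) (H x)). split; auto. eauto.
  - intros [x [[b [Cb ->]] ->]]; simpl; eauto.
Qed.
End Sub.

Section BW.
Variables (T : Type) (le : T -> T -> Prop) (Hc : is_cpo le) (g : T -> T) (Hg : forall x, le x (g x)).

Definition bw_closed (S : T -> Prop) : Prop :=
  (forall x, S x -> S (g x)) /\
  (forall C s, is_chain le C -> is_lub le C s -> (forall c, C c -> S c) -> S s).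
Definition bwM (x : T) : Prop := forall S, bw_closed S -> S x.

Lemma bwM_closed : bw_closed bwM.
Proof. split.
  - intros x Mx S HS. apply (proj1 HS), Mx, HS.
  - intros C s Hch Hl HC S HS. apply (proj2 HS C s Hch Hl). intros c Cc; apply HC; auto.
Qed.

Lemma bwM_sub (S : T -> Prop) : bw_closed (fun x => bwM x /\ S x) -> forall x, bwM x -> S x.
Proof. intros H x Mx. apply (Mx _ H). Qed.

Let refl := proj1 Hc.
Let trans := proj1 (proj2 Hc).
Let anti := proj1 (proj2 (proj2 Hc)).
Let lubs := proj2 (proj2 (proj2 Hc)).

Definition extreme (c : T) : Prop := bwM c /\ forall x, bwM x -> le x c -> x <> c -> le (g x) c.

Lemma bw_Mc : forall c, extreme c -> forall x, bwM x -> le x c \/ le (g c) x.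
Proof.
  intros c [Mc Ec]. apply bwM_sub. split.
  - intros x [Mx Hx]. split; [apply bwM_closed; auto|].
    destruct Hx as [Hx|Hx].
    + destruct (classic (x = c)) as [->|Hne]; [right; apply refl| left; apply Ec; auto].
    + right. eapply trans; eauto.
  - intros C s Hch Hl HC. split; [apply (proj2 bwM_closed C s Hch Hl); intros; apply HC; auto|].
    destruct (classic (exists c', C c' /\ le (g c) c')) as [[c' [Cc' Hc']]|Hn].
    + right. eapply trans; [exact Hc'|]. apply (proj1 Hl); auto.
    + left. apply (proj2 Hl). intros x Cx. destruct (proj2 (HC x Cx)) as [H|H]; auto.
      exfalso; eauto.
Qed.

Lemma bw_ext : forall c, bwM c -> extreme c.
Proof.
  apply bwM_sub. split.
  - intros c [Mc Ec]. split; [apply bwM_closed; auto|]. split; [apply bwM_closed; auto|].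
    intros x Mx Hxg Hne. destruct (bw_Mc c Ec x Mx) as [H|H].
    + destruct (classic (x = c)) as [->|Hne2]; [apply refl|].
      eapply trans; [apply (proj2 Ec); auto| apply Hg].
    + exfalso; apply Hne; apply anti; auto.
  - intros C s Hch Hl HC.
    assert (Ms : bwM s) by (apply (proj2 bwM_closed C s Hch Hl); intros; apply HC; auto).
    split; auto. split; auto.
    intros x Mx Hxs Hne.
    destruct (classic (exists c, C c /\ ~ le c x)) as [[c [Cc Hcx]]|Hn].
    + destruct (HC c Cc) as [_ Ec].
      destruct (bw_Mc c Ec x Mx) as [H|H].
      * assert (x <> c) by (intros ->; apply Hcx, refl).
        eapply trans; [apply (proj2 Ec); auto|]. apply (proj1 Hl); auto.
      * exfalso. apply Hcx. eapply trans; [apply Hg|exact H].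
    + exfalso. apply Hne. apply anti; auto. apply (proj2 Hl). intros c Cc.
      apply NNPP; intro; apply Hn; eauto.
Qed.

Lemma bourbaki_witt : exists x, g x = x.
Proof.
  assert (Hch : is_chain le bwM).
  { intros x y Mx My. destruct (bw_Mc y (bw_ext y My) x Mx) as [H|H]; auto.
    right. eapply trans; [apply Hg|exact H]. }
  destruct (lubs _ Hch) as [m Hm].
  assert (Mm : bwM m) by (apply (proj2 bwM_closed _ m Hch Hm); auto).
  exists m. apply anti; [apply (proj1 Hm); apply bwM_closed; auto| apply Hg].
Qed.
End BW.

Lemma sig_ext' {T} (P : T -> Prop) (x y : {a | P a}) : proj1_sig x = proj1_sig y -> x = y.
Proof. destruct x as [x px], y as [y py]; simpl; intros ->. f_equal; apply proof_irrelevance. Qed.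

Lemma list_cover_finite (T : Type) (l : list T) : (forall x, In x l) -> finite_type T.
Proof.
  intros Hl.
  set (dec := fun x y : T => excluded_middle_informative (x = y)).
  set (l' := nodup dec l).
  assert (Hnd : NoDup l') by apply NoDup_nodup.
  assert (Hin : forall x, In x l') by (intro x; apply nodup_In; auto).
  assert (Hidx : forall x, {n | nth_error l' n = Some x}).
  { intro x. apply constructive_indefinite_description, In_nth_error, Hin. }
  assert (Hlt : forall x, proj1_sig (Hidx x) < length l').
  { intro x. apply nth_error_Some. rewrite (proj2_sig (Hidx x)). discriminate. }
  exists (length l'), (fun x => exist _ (proj1_sig (Hidx x)) (Hlt x)). split.
  - intros x y E. apply (f_equal (@proj1_sig _ _)) in E. simpl in E.
    pose proof (proj2_sig (Hidx x)) as Ex. pose proof (proj2_sig (Hidx y)) as Ey. simpl in *.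
    rewrite E in Ex. rewrite Ex in Ey. injection Ey; auto.
  - intros [m Hm]. assert (Hs : nth_error l' m <> None) by (apply nth_error_Some; auto).
    destruct (nth_error l' m) as [x|] eqn:Ex; [|congruence].
    exists x. apply sig_ext'. simpl.
    apply (proj1 (NoDup_nth_error l') Hnd); [apply Hlt|].
    rewrite (proj2_sig (Hidx x)). auto.
Qed.

Fixpoint iterL {T} (st : list T -> T) (n : nat) : list T :=
  match n with 0 => nil | S n => st (iterL st n) :: iterL st n end.

Lemma iterL_in {T} (st : list T -> T) : forall n m, m < n -> In (st (iterL st m)) (iterL st n).
Proof.
  induction n; intros m Hm; [lia|]. simpl.
  destruct (Nat.eq_dec m n) as [->|Hne]; [left; auto|right; apply IHn; lia].
Qed.

Lemma nat_inj_of (T : Type) (D : T -> Prop) :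
  (forall l : list T, exists x, D x /\ ~ In x l) -> exists i : nat -> T, injective i /\ forall n, D (i n).
Proof.
  intros H.
  set (st := fun l => proj1_sig (constructive_indefinite_description _ (H l))).
  assert (Hst : forall l, D (st l) /\ ~ In (st l) l) by (intro l; exact (proj2_sig (constructive_indefinite_description _ (H l)))).
  exists (fun n => st (iterL st n)). split.
  - intros m n E. destruct (Nat.lt_total m n) as [h|[h|h]]; auto; exfalso.
    + apply (proj2 (Hst (iterL st n))). rewrite <- E. apply iterL_in; auto.
    + apply (proj2 (Hst (iterL st m))). rewrite E. apply iterL_in; auto.
  - intro n; apply Hst.
Qed.

Section Double.
Variable K : Type.
Definition Rel := bool -> K -> K -> Prop.
Definition domR (R : Rel) x := forall b, exists y, R b x y.
Definition goodR (R : Rel) : Prop :=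
  (forall b x y y', R b x y -> R b x y' -> y = y') /\
  (forall b x b' x' y, R b x y -> R b' x' y -> b = b' /\ x = x') /\
  (forall b x y, R b x y -> domR R x) /\
  (forall b x y, R b x y -> domR R y).
Definition GR := {R | goodR R}.
Definition leGR (R R' : GR) : Prop := forall b x y, proj1_sig R b x y -> proj1_sig R' b x y.

Lemma GR_cpo : is_cpo leGR.
Proof.
  unfold leGR; split; [|split; [|split]].
  - auto.
  - auto.
  - intros [R HR] [R' HR'] H1 H2; apply sig_ext'; simpl in *.
    apply functional_extensionality; intro b; apply functional_extensionality; intro x;
    apply functional_extensionality; intro y; apply propositional_extensionality; split; auto.
  - intros C Hch.
    set (U := fun b x y => exists R, C R /\ proj1_sig R b x y).
    assert (HU : goodR U).
    { split; [|split; [|split]].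
      - intros b x y y' [R1 [C1 H1]] [R2 [C2 H2]].
        destruct (Hch R1 R2 C1 C2) as [L|L].
        + apply L in H1. exact (proj1 (proj2_sig R2) _ _ _ _ H1 H2).
        + apply L in H2. exact (proj1 (proj2_sig R1) _ _ _ _ H1 H2).
      - intros b x b' x' y [R1 [C1 H1]] [R2 [C2 H2]].
        destruct (Hch R1 R2 C1 C2) as [L|L].
        + apply L in H1. exact (proj1 (proj2 (proj2_sig R2)) _ _ _ _ _ H1 H2).
        + apply L in H2. exact (proj1 (proj2 (proj2_sig R1)) _ _ _ _ _ H1 H2).
      - intros b x y [R1 [C1 H1]] b'.
        destruct (proj1 (proj2 (proj2 (proj2_sig R1))) _ _ _ H1 b') as [y' Hy'].
        exists y', R1; auto.
      - intros b x y [R1 [C1 H1]] b'.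
        destruct (proj2 (proj2 (proj2 (proj2_sig R1))) _ _ _ H1 b') as [y' Hy'].
        exists y', R1; auto. }
    exists (exist _ U HU). split.
    + intros R CR b x y H; simpl. exists R; auto.
    + intros u Hu b x y [R [CR H]]. apply (Hu R CR); auto.
Qed.

Lemma maximal_GR : exists R : GR, forall R', leGR R R' -> R' = R.
Proof.
  set (g := fun R : GR => match excluded_middle_informative (exists R', leGR R R' /\ R' <> R) with
              | left H => proj1_sig (constructive_indefinite_description _ H)
              | right _ => R end).
  assert (Hg : forall R, leGR R (g R)).
  { intro R. unfold g. destruct (excluded_middle_informative _) as [H|H].
    - exact (proj1 (proj2_sig (constructive_indefinite_description _ H))).
    - intros b x y; auto. }
  destruct (bourbaki_witt GR leGR GR_cpo g Hg) as [R HR].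
  exists R. intros R' HR'. apply NNPP; intro Hne.
  unfold g in HR. destruct (excluded_middle_informative _) as [H|H].
  - exact (proj2 (proj2_sig (constructive_indefinite_description _ H)) HR).
  - apply H; eauto.
Qed.

Lemma double_inj : ~ finite_type K -> exists psi : bool * K -> K, injective psi.
Proof.
  intros Hinf.
  destruct maximal_GR as [[R0 HR0] Hmax].
  destruct HR0 as [Hfun [Hinj [Hd1 Hd2]]].
  set (D := fun x => ~ domR R0 x).
  destruct (classic (forall l : list K, exists x, D x /\ ~ In x l)) as [HD|HD].
  - exfalso.
    destruct (nat_inj_of K D HD) as [i [Hi HiD]].
    set (R' := fun b x y => R0 b x y \/ exists n, x = i n /\ y = i (2 * n + Nat.b2n b)).
    assert (Hdi : forall n, domR R' (i n)).
    { intros n b. exists (i (2 * n + Nat.b2n b)). right; eauto. }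
    assert (HR' : goodR R').
    { split; [|split; [|split]].
      - intros b x y y' [H1|[n [-> ->]]] [H2|[n' [E ->]]].
        + eauto.
        + exfalso. apply (HiD n'). rewrite <- E. eapply Hd1; eauto.
        + exfalso. apply (HiD n). eapply Hd1; eauto.
        + apply Hi in E. subst; auto.
      - intros b x b' x' y [H1|[n [-> ->]]] [H2|[n' [-> E]]].
        + eauto.
        + exfalso. apply (HiD (2 * n' + Nat.b2n b')). rewrite <- E. eapply Hd2; eauto.
        + exfalso. apply (HiD (2 * n + Nat.b2n b)). eapply Hd2; eauto.
        + apply Hi in E. destruct b, b'; simpl in E; split; try f_equal; try lia.
      - intros b x y [H1|[n [-> ->]]]; auto.
        intro b'. destruct (Hd1 _ _ _ H1 b') as [y' Hy']. exists y'; left; auto.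
      - intros b x y [H1|[n [-> ->]]]; auto.
        intro b'. destruct (Hd2 _ _ _ H1 b') as [y' Hy']. exists y'; left; auto. }
    assert (Hle : leGR (exist _ R0 (conj Hfun (conj Hinj (conj Hd1 Hd2)))) (exist _ R' HR')).
    { intros b x y H; simpl; left; auto. }
    apply Hmax in Hle. apply (f_equal (@proj1_sig _ _)) in Hle. simpl in Hle.
    assert (HR'0 : R' true (i 0) (i 1)) by (right; exists 0; auto).
    rewrite Hle in HR'0. apply (HiD 0). eapply Hd1; eauto.
  - apply not_all_ex_not in HD. destruct HD as [l2 Hl2].
    assert (Hl2' : forall x, D x -> In x l2).
    { intros x Dx. apply NNPP; intro Hn. apply Hl2; eauto. }
    assert (HY : forall l : list K, exists x, domR R0 x /\ ~ In x l).
    { intro l1. apply NNPP; intro Hn. apply Hinf. apply (list_cover_finite K (l1 ++ l2)).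
      intro x. apply in_or_app. destruct (classic (domR R0 x)) as [Hx|Hx].
      - left. apply NNPP; intro Hn2. apply Hn; eauto.
      - right; apply Hl2'; auto. }
    destruct (nat_inj_of K (domR R0) HY) as [j [Hj HjY]].
    set (e := fun x => epsilon (inhabits 0) (fun n => nth_error l2 n = Some x)).
    assert (He : forall x, D x -> nth_error l2 (e x) = Some x).
    { intros x Dx. apply epsilon_spec. apply In_nth_error; auto. }
    set (phi := fun b x => epsilon (inhabits x) (fun y => R0 b x y)).
    assert (Hphi : forall b x, domR R0 x -> R0 b x (phi b x)).
    { intros b x Hx. apply epsilon_spec. apply Hx. }
    assert (Hphid : forall b x, domR R0 x -> domR R0 (phi b x)).
    { intros b x Hx. eapply Hd2. apply Hphi; auto. }
    exists (fun p : bool * K => let (b, x) := p in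
        if excluded_middle_informative (domR R0 x) then phi true (phi b x)
        else phi false (j (2 * e x + Nat.b2n b))).
    intros [b x] [b' x'] E. cbv beta iota zeta in E.
    destruct (excluded_middle_informative (domR R0 x)) as [Hx|Hx];
    destruct (excluded_middle_informative (domR R0 x')) as [Hx'|Hx'].
    + assert (H1 := Hphi true _ (Hphid b x Hx)). assert (H2 := Hphi true _ (Hphid b' x' Hx')).
      rewrite E in H1. destruct (Hinj _ _ _ _ _ H1 H2) as [_ E2].
      assert (H3 := Hphi b _ Hx). assert (H4 := Hphi b' _ Hx'). rewrite E2 in H3.
      destruct (Hinj _ _ _ _ _ H3 H4) as [-> ->]; auto.
    + assert (H1 := Hphi true _ (Hphid b x Hx)). assert (H2 := Hphi false _ (HjY (2 * e x' + Nat.b2n b'))).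
      rewrite E in H1. destruct (Hinj _ _ _ _ _ H1 H2) as [Hc _]; discriminate.
    + assert (H1 := Hphi false _ (HjY (2 * e x + Nat.b2n b))). assert (H2 := Hphi true _ (Hphid b' x' Hx')).
      rewrite E in H1. destruct (Hinj _ _ _ _ _ H1 H2) as [Hc _]; discriminate.
    + assert (H1 := Hphi false _ (HjY (2 * e x + Nat.b2n b))). assert (H2 := Hphi false _ (HjY (2 * e x' + Nat.b2n b'))).
      rewrite E in H1. destruct (Hinj _ _ _ _ _ H1 H2) as [_ E2].
      apply Hj in E2.
      assert (Hb : b = b' /\ e x = e x') by (destruct b, b'; simpl in E2; split; auto; lia).
      destruct Hb as [-> Hex].
      assert (Ex := He x Hx). assert (Ex' := He x' Hx'). rewrite Hex in Ex. rewrite Ex in Ex'.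
      injection Ex' as ->; auto.
Qed.
End Double.

Lemma sig_ext {T} (P : T -> Prop) (x y : {a | P a}) : proj1_sig x = proj1_sig y -> x = y.
Proof. destruct x as [x px], y as [y py]; simpl; intros ->. f_equal; apply proof_irrelevance. Qed.

Lemma chain_closed_pre (A B : cpo) (g : A -> B) (P : B -> Prop) :
  is_cpo_map g -> chain_closed B P -> chain_closed A (fun x => P (g x)).
Proof.
  intros Hg HP C s Hc Hl HC.
  apply (HP _ _ (img_chain A B g C Hg Hc) (Hg C s Hc Hl)).
  intros y [x [Cx ->]]; auto.
Qed.

Lemma cpo_bot (A : cpo) : {b : A | is_lub (cle A) (fun _ => False) b}.
Proof.
  apply constructive_indefinite_description. apply cpo_lub. intros x y [].
Qed.

Section Dense.
Variables (K I : Type) (lt : I -> I -> Prop) (Hwo : well_order lt)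
  (A : I -> cpo) (f : forall a b, A a -> A b)
  (Hf_map : forall a b, wle lt a b -> is_cpo_map (f a b))
  (Hf_comp : forall a b c, wle lt a b -> wle lt b c ->
               forall x, f b c (f a b x) = f a c x)
  (Hf_id : forall a x, f a a x = x)
  (Hsucc : forall a b, is_succ lt a b ->
          exists u v : two -> A a, is_cpo_map u /\ is_cpo_map v /\ is_coequalizer u v (f a b))
  (Hlim : forall a, is_limit lt a -> is_colimit_below lt A f a)
  (z : I) (Hz : forall a, wle lt z a)
  (inj : K -> three -> A z) (Hinj : is_coproduct (fun _ : K => three) (A z) inj).

Lemma dense_all : forall a (P : A a -> Prop), chain_closed (A a) P ->
  (forall x0, P (f z a x0)) -> forall y, P y.
Proof.
  destruct Hwo as [Htr [Htri Hwf]].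
  intro a. induction a as [a IH] using (well_founded_induction Hwf).
  intros P HP Hgen y.
  assert (Hbelow : forall b, lt b a -> forall x, P (f b a x)).
  { intros b Hb. apply (IH b Hb (fun x => P (f b a x))).
    - apply chain_closed_pre; auto. apply Hf_map; left; auto.
    - intro x0. rewrite Hf_comp; auto. left; auto. }
  destruct (classic (exists b, lt b a)) as [[b0 Hb0]|Hno].
  2:{ destruct (Hz a) as [Hza| <-]. { exfalso; eauto. }
      rewrite <- (Hf_id z y). apply Hgen. }
  destruct (classic (is_limit lt a)) as [Hl|Hnl].
  - destruct (Hlim a Hl) as [Hmaps [Hcomp Huniv]].
    destruct (cpo_bot (A a)) as [bot Hbot].
    assert (Pbot : P bot). { apply (HP (fun _ => False)); auto. intros x y' []. intros c []. }
    set (S := subcpo (A a) P HP).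
    set (g := fun b (x : A b) => match excluded_middle_informative (lt b a) with
                | left H => (exist _ (f b a x) (Hbelow b H x) : S)
                | right _ => (exist _ bot Pbot : S) end).
    assert (Hg1 : forall b (H : lt b a) x, proj1_sig (g b x) = f b a x).
    { intros b H x. unfold g. destruct (excluded_middle_informative (lt b a)); [reflexivity|contradiction]. }
    destruct (Huniv S g) as [h [Hh [Hhg _]]].
    { intros b Hb. unfold g. destruct (excluded_middle_informative (lt b a)) as [H|]; [|contradiction].
      apply (corestr_cpo_map (A a) P HP (A b) (f b a) (Hmaps b Hb) (Hbelow b H)). }
    { intros b c Hbc Hca x. apply sig_ext. rewrite Hg1 by auto.
      assert (Hba : lt b a) by (destruct Hbc as [Hbc| ->]; eauto).
      rewrite Hg1 by auto. apply Hcomp; auto. }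
    destruct (Huniv (A a) (fun b x => f b a x)) as [h0 [_ [_ Hu0]]].
    { auto. }
    { intros b c Hbc Hca x. apply Hcomp; auto. }
    assert (E1 := Hu0 (fun x => x) (cpo_map_id _) (fun b _ x => eq_refl) y).
    assert (E2 := Hu0 (fun x => proj1_sig (h x))
                   (cpo_map_comp _ _ _ _ _ Hh (incl_cpo_map (A a) P HP))
                   (fun b Hb x => eq_trans (f_equal (@proj1_sig _ _) (Hhg b Hb x)) (Hg1 b Hb x)) y).
    simpl in E1, E2. rewrite E1, <- E2. exact (proj2_sig (h y)).
  - assert (Hs : exists b, is_succ lt b a).
    { apply NNPP; intro Hn. apply Hnl. split; [eauto|].
      intros b Hb. apply NNPP; intro Hn2. apply Hn. exists b. split; auto.
      intros c Hbc. destruct (Htri a c) as [H|[H|H]].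
      - left; auto.
      - right; auto.
      - exfalso; apply Hn2; eauto. }
    destruct Hs as [b [Hba Hbs]].
    destruct (Hsucc b a (conj Hba Hbs)) as [u [v [Hu [Hv [Hq [Hqe Huniv]]]]]].
    set (S := subcpo (A a) P HP).
    set (g := fun x => (exist _ (f b a x) (Hbelow b Hba x) : S)).
    destruct (Huniv S g) as [h [Hh [Hhg _]]].
    { apply (corestr_cpo_map (A a) P HP (A b) (f b a) Hq (Hbelow b Hba)). }
    { intros x. apply sig_ext. simpl. apply Hqe. }
    destruct (Huniv (A a) (f b a)) as [h0 [_ [_ Hu0]]]; auto.
    assert (E1 := Hu0 (fun x => x) (cpo_map_id _) (fun x => eq_refl) y).
    assert (E2 := Hu0 (fun x => proj1_sig (h x))
                   (cpo_map_comp _ _ _ _ _ Hh (incl_cpo_map (A a) P HP))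
                   (fun x => f_equal (@proj1_sig _ _) (Hhg x)) y).
    simpl in E1, E2. rewrite E1, <- E2. exact (proj2_sig (h y)).
Qed.

Lemma dense_coprod : forall (P : A z -> Prop), chain_closed (A z) P ->
  (forall k i, P (inj k i)) -> forall y, P y.
Proof.
  intros P HP Hgen y.
  destruct Hinj as [Hmaps Huniv].
  set (S := subcpo (A z) P HP).
  set (g := fun k (x : three) => (exist _ (inj k x) (Hgen k x) : S)).
  destruct (Huniv S g) as [h [Hh [Hhg _]]].
  { intro k. apply (corestr_cpo_map (A z) P HP three (inj k) (Hmaps k) (Hgen k)). }
  destruct (Huniv (A z) inj) as [h0 [_ [_ Hu0]]]; auto.
  assert (E1 := Hu0 (fun x => x) (cpo_map_id _) (fun k x => eq_refl) y).
  assert (E2 := Hu0 (fun x => proj1_sig (h x))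
                 (cpo_map_comp _ _ _ _ _ Hh (incl_cpo_map (A z) P HP))
                 (fun k x => f_equal (@proj1_sig _ _) (Hhg k x)) y).
  simpl in E1, E2. rewrite E1, <- E2. exact (proj2_sig (h y)).
Qed.

Lemma dense_gen : forall a (P : A a -> Prop), chain_closed (A a) P ->
  (forall k i, P (f z a (inj k i))) -> forall y, P y.
Proof.
  intros a P HP Hgen. apply dense_all; auto.
  apply (dense_coprod (fun x => P (f z a x))); auto.
  apply chain_closed_pre; auto.
Qed.
End Dense.

Definition zero3 : three := exist (fun i => i <= 2) 0 (Nat.le_0_l 2).
Definition one3 : three := exist (fun i => i <= 2) 1 (le_S _ _ (le_n 1)).
Definition two3 : three := exist (fun i => i <= 2) 2 (le_n 2).
Definition lvl (b : bool) : three := if b then one3 else two3.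

Lemma three_cases (i : three) : i = zero3 \/ exists b, i = lvl b.
Proof.
  destruct i as [n p].
  assert (n = 0 \/ n = 1 \/ n = 2) as [->|[->| ->]] by lia.
  - left; apply sig_ext; auto.
  - right; exists true; apply sig_ext; auto.
  - right; exists false; apply sig_ext; auto.
Qed.

Lemma chain_list_max {T} (le : T -> T -> Prop) (Hrefl : forall x, le x x)
  (Htr : forall x y z, le x y -> le y z -> le x z) (l : list T) :
  forall C, is_chain le C -> (forall c, C c -> In c l) ->
  (exists m, C m /\ forall c, C c -> le c m) \/ (forall c, ~ C c).
Proof.
  induction l as [|x l IH]; intros C Hch Hin.
  - right; intros c Cc; exact (Hin c Cc).
  - set (C' := fun c => C c /\ c <> x).
    assert (Hch' : is_chain le C') by (intros a b [Ca _] [Cb _]; apply Hch; auto).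
    assert (Hin' : forall c, C' c -> In c l).
    { intros c [Cc Hne]. destruct (Hin c Cc) as [->|H]; [contradiction|auto]. }
    assert (Hsplit : forall c, C c -> c = x \/ C' c).
    { intros c Cc. destruct (classic (c = x)); [left|right; split]; auto. }
    destruct (IH C' Hch' Hin') as [[m [[Cm _] Hm]]|Hemp].
    + left. destruct (classic (C x)) as [Cx|Cx].
      * destruct (Hch x m Cx Cm) as [L|L].
        -- exists m; split; auto. intros c Cc. destruct (Hsplit c Cc) as [->|H]; auto.
        -- exists x; split; auto. intros c Cc. destruct (Hsplit c Cc) as [->|H]; auto.
           eapply Htr; [apply Hm; auto|exact L].
      * exists m; split; auto. intros c Cc. destruct (Hsplit c Cc) as [->|H]; [contradiction|auto].
    + destruct (classic (C x)) as [Cx|Cx].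
      * left. exists x; split; auto. intros c Cc. destruct (Hsplit c Cc) as [->|H]; [auto|].
        exfalso; exact (Hemp c H).
      * right. intros c Cc. destruct (Hsplit c Cc) as [->|H]; [contradiction|exact (Hemp c H)].
Qed.

Lemma has_card_list (K : Type) n : has_card K n -> exists l : list K, forall k, In k l.
Proof.
  intros [e [He Hs]].
  set (pre := fun m => match excluded_middle_informative (exists k, proj1_sig (e k) = m) with
               | left H => Some (proj1_sig (constructive_indefinite_description _ H))
               | right _ => None end).
  exists (flat_map (fun m => match pre m with Some k => k :: nil | None => nil end) (seq 0 n)).
  intro k. apply in_flat_map. exists (proj1_sig (e k)). split.
  - apply in_seq. pose proof (proj2_sig (e k)) as Hek; cbv beta in Hek; lia.
  - unfold pre. destruct (excluded_middle_informative _) as [H|H].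
    + left. pose proof (proj2_sig (constructive_indefinite_description _ H)) as E. simpl in E.
      apply He. apply sig_ext. exact E.
    + exfalso; eauto.
Qed.

Section Final.
Variables (K : Type) (B : cpo) (g : K -> three -> B)
  (Hg0 : forall k, is_lub (cle B) (fun _ => False) (g k zero3))
  (Hdense : forall P, chain_closed B P -> (forall k i, P (g k i)) -> forall y, P y).

Definition Gen (w : B) : Prop := exists k i, w = g k i.

Lemma lub_gen : forall y, is_lub (cle B) (fun w => Gen w /\ cle B w y) y.
Proof.
  apply Hdense.
  - intros C s Hch Hl HC. split.
    + intros w [_ H]; exact H.
    + intros u Hu. apply (proj2 Hl). intros c Cc. apply (proj2 (HC c Cc)).
      intros w [Gw Hw]. apply Hu. split; auto. eapply cle_trans; [exact Hw|]. apply (proj1 Hl); auto.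
  - intros k i. split.
    + intros w [_ H]; exact H.
    + intros u Hu. apply Hu. split; [exists k, i; auto|apply cle_refl].
Qed.

Lemma gen_determines : forall y y', (forall k b, cle B (g k (lvl b)) y <-> cle B (g k (lvl b)) y') -> y = y'.
Proof.
  intros y y' H. apply (lub_unique B (fun w => Gen w /\ cle B w y)); [apply lub_gen|].
  eapply is_lub_ext; [|apply lub_gen]. intros w; split; intros [[k [i ->]] Hw]; split; try (exists k, i; auto).
  - destruct (three_cases i) as [->|[b ->]]; [apply (proj2 (Hg0 k)); intros _ []|apply H; auto].
  - destruct (three_cases i) as [->|[b ->]]; [apply (proj2 (Hg0 k)); intros _ []|apply H; auto].
Qed.

Lemma inf_case : ~ finite_type K -> exists e : B -> (K -> bool), injective e.
Proof.
  intros Hinf. destruct (double_inj K Hinf) as [psi Hpsi].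
  set (Pr := fun y x => exists b k, x = psi (b, k) /\ cle B (g k (lvl b)) y).
  exists (fun y x => if excluded_middle_informative (Pr y x) then true else false).
  intros y y' E. apply gen_determines.
  assert (Hkey : forall y1 y2, (fun x => if excluded_middle_informative (Pr y1 x) then true else false) =
                  (fun x => if excluded_middle_informative (Pr y2 x) then true else false) ->
            forall k b, cle B (g k (lvl b)) y1 -> cle B (g k (lvl b)) y2).
  { intros y1 y2 E12 k b H1. apply (f_equal (fun F => F (psi (b, k)))) in E12.
    destruct (excluded_middle_informative (Pr y1 (psi (b, k)))) as [P1|P1];
    [|exfalso; apply P1; exists b, k; auto].
    destruct (excluded_middle_informative (Pr y2 (psi (b, k)))) as [P2|P2]; [|discriminate].
    destruct P2 as [b' [k' [Eq Hle]]]. apply Hpsi in Eq. injection Eq as -> ->. exact Hle. }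
  intros k b; split; apply Hkey; auto.
Qed.

Lemma fin_case : forall n, has_card K n -> exists e : B -> {m : nat | m < 2 * n + 1}, injective e.
Proof.
  intros n Hn.
  destruct (has_card_list K n Hn) as [lK HlK].
  destruct Hn as [e0 [He0 _]].
  destruct (cpo_bot B) as [bot Hbot].
  set (L := bot :: map (fun p => g (fst p) (snd p)) (list_prod lK (zero3 :: one3 :: two3 :: nil))).
  assert (HL : forall y, In y L).
  { apply Hdense.
    - intros C s Hch Hl HC.
      destruct (chain_list_max (cle B) (cle_refl B) (cle_trans B) L C Hch HC) as [[m [Cm Hm]]|Hemp].
      + assert (s = m).
        { apply (lub_unique B C); [exact Hl|]. split; [exact Hm|]. intros u Hu; apply Hu; exact Cm. }
        subst; auto.
      + assert (s = bot).
        { apply (lub_unique B C); auto. eapply is_lub_ext; [|exact Hbot].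
          intro x; split; [intros []|intro Cx; exact (Hemp x Cx)]. }
        subst; left; auto.
    - intros k i. right. apply in_map_iff. exists (k, i). split; auto.
      apply in_prod_iff. split; auto.
      destruct (three_cases i) as [->|[[|] ->]]; simpl; auto. }
  assert (Hcov : forall y, y = bot \/ exists p : K * bool, y = g (fst p) (lvl (snd p))).
  { intro y. destruct (HL y) as [<-|Hy]; [left; auto|].
    apply in_map_iff in Hy. destruct Hy as [[k i] [<- _]]. simpl.
    destruct (three_cases i) as [->|[b ->]].
    - left. apply (lub_unique B (fun _ => False)); auto.
    - right. exists (k, b); auto. }
  assert (Hb : forall p : K * bool, 1 + 2 * proj1_sig (e0 (fst p)) + Nat.b2n (snd p) < 2 * n + 1).
  { intros [k b]. pose proof (proj2_sig (e0 k)). destruct b; simpl in *; lia. }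
  assert (H0 : 0 < 2 * n + 1) by lia.
  exists (fun y => match excluded_middle_informative (exists p : K * bool, y = g (fst p) (lvl (snd p))) with
           | left H => exist (fun m => m < 2 * n + 1) _ (Hb (proj1_sig (constructive_indefinite_description _ H)))
           | right _ => exist (fun m => m < 2 * n + 1) 0 H0 end).
  intros y y' E.
  destruct (excluded_middle_informative (exists p : K * bool, y = g (fst p) (lvl (snd p)))) as [H|H];
  destruct (excluded_middle_informative (exists p : K * bool, y' = g (fst p) (lvl (snd p)))) as [H'|H'];
  apply (f_equal (@proj1_sig _ _)) in E; simpl in E.
  - destruct (constructive_indefinite_description _ H) as [[k b] Ey].
    destruct (constructive_indefinite_description _ H') as [[k' b'] Ey']. simpl in *.
    assert (Hkb : proj1_sig (e0 k) = proj1_sig (e0 k') /\ b = b') by (destruct b, b'; simpl in E; split; auto; lia).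
    destruct Hkb as [Hk ->]. apply sig_ext in Hk. apply He0 in Hk. subst; auto.
  - lia.
  - lia.
  - destruct (Hcov y) as [->|?]; [|contradiction]. destruct (Hcov y') as [->|?]; [auto|contradiction].
Qed.
End Final.

Lemma zero3_bot : is_lub (cle three) (fun _ => False) zero3.
Proof. split; [intros _ []|]. intros u _. simpl. unfold nchain_le. simpl. lia. Qed.

Theorem mainTheorem3
  (K : Type)                                  (* kappa, as a set of that cardinality *)
  (I : Type) (lt : I -> I -> Prop)            (* an initial segment of Ord *)
  (Hwo : well_order lt)
  (A : I -> cpo) (f : forall a b, A a -> A b) (* f a b meaningful for a <= b *)
  (Hf_map : forall a b, wle lt a b -> is_cpo_map (f a b))
  (Hf_comp : forall a b c, wle lt a b -> wle lt b c ->
               forall x, f b c (f a b x) = f a c x)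
  (Hf_id : forall a x, f a a x = x)
  (H0 : forall z, (forall a, wle lt z a) ->
          exists inj : K -> three -> A z, is_coproduct (fun _ : K => three) (A z) inj)
  (Hsucc : forall a b, is_succ lt a b ->
          exists u v : two -> A a, is_cpo_map u /\ is_cpo_map v /\ is_coequalizer u v (f a b))
  (Hlim : forall a, is_limit lt a -> is_colimit_below lt A f a) :
  forall a : I,
    (~ finite_type K -> exists e : A a -> (K -> bool), injective e) /\
    (forall n, has_card K n -> exists e : A a -> {m : nat | m < 2 * n + 1}, injective e).
Proof.
  intro a.
  pose proof Hwo as [Htr [Htri Hwf]].
  assert (Hmin : exists z, forall b, ~ lt b z).
  { clear H0. induction a as [a IH] using (well_founded_induction Hwf).
    destruct (classic (exists b, lt b a)) as [[b Hb]|Hn]; [exact (IH b Hb)|].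
    exists a; intros b Hb; eauto. }
  destruct Hmin as [z Hzmin].
  assert (Hz : forall c, wle lt z c).
  { intro c. destruct (Htri z c) as [H|[H|H]]; [left; auto|right; auto|exfalso; eapply Hzmin; eauto]. }
  destruct (H0 z Hz) as [inj Hinj].
  assert (Hdense := dense_gen K I lt Hwo A f Hf_map Hf_comp Hf_id Hsucc Hlim z Hz inj Hinj a).
  assert (Hg0 : forall k, is_lub (cle (A a)) (fun _ => False) (f z a (inj k zero3))).
  { intro k.
    assert (Hm : is_cpo_map (fun x => f z a (inj k x))).
    { apply (cpo_map_comp three (A z) (A a)); [apply (proj1 Hinj)|apply Hf_map, Hz]. }
    assert (Hc : is_chain (cle three) (fun _ => False)) by (intros x y []).
    eapply is_lub_ext; [|exact (Hm _ _ Hc zero3_bot)].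
    intro x; split; [intros [y [[] _]]|intros []]. }
  split.
  - apply (inf_case K (A a) (fun k i => f z a (inj k i)) Hg0 Hdense).
  - apply (fin_case K (A a) (fun k i => f z a (inj k i)) Hg0 Hdense).
Qed.
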